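(* Let $G = N \rtimes H$ with $N, H$ finite abelian groups. Let $P_N$ be the idempotent eigenbasis of $\mathbb{C}[N]$, let $\mathcal{O}_\alpha$ be an $H$-orbit in $P_N$ (under conjugation), $H_\alpha$ the stabilizer in $H$ of an element of $\mathcal{O}_\alpha$, and $\{u_1,\dots,u_{|H_\alpha|}\}$ the idempotent eigenbasis of $\mathbb{C}[H_\alpha]$. Then for every $v_i \in \mathcal{O}_\alpha$ and every $1 \le p \le |H_\alpha|$, the element $v_iu_p$ is a primitive idempotent of $\mathbb{C}[G]$.
   Context: $N$ is a normal subgroup and $H$ acts on $N$ by conjugation, $G = NH$, $N\cap H = \{e\}$; $\mathbb{C}[N]$, $\mathbb{C}[H_\alpha]$ are regarded as subalgebras of $\mathbb{C}[G]$. For a finite abelian group $K$, the idempotent eigenbasis of $\mathbb{C}[K]$ is the unique basis $\{J_1,\dots,J_{|K|}\}$ of $\mathbb{C}[K]$ consisting of simultaneous eigenvectors of left multiplication by all elements of $\mathbb{C}[K]$ and satisfying $J_p^2 = J_p$, $J_pJ_q = 0$ for $p\neq q$. Conjugation by $h\in H$ is an algebra automorphism of $\mathbb{C}[N]$ and therefore permutes $P_N$; since $H$ is abelian all elements of an orbit have the same stabilizer. An idempotent $u$ is primitive if it cannot be written as $u = u_1+u_2$ with $u_1,u_2$ nonzero idempotents satisfying $u_1u_2=u_2u_1=0$. *)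

(* Defs.v *)
From HB Require Import structures.
From mathcomp Require Import all_boot all_order all_algebra all_fingroup all_solvable all_field all_character.
Set Implicit Arguments. Unset Strict Implicit. Unset Printing Implicit Defensive.
Import GRing.Theory Num.Theory.
Local Open Scope ring_scope.

(* The complex group algebra C[gT] of a finite group type gT: an element
   sum_g a(g) g is represented by its coefficient function a. *)
Definition galg (gT : finGroupType) := {ffun gT -> algC}.

Definition gmul (gT : finGroupType) (a b : galg gT) : galg gT :=
  [ffun g => \sum_(x : gT) a x * b (x^-1 * g)%g].

(* Subalgebra C[K] for K a subset (subgroup) of gT: elements supported in K. *)
Definition in_galg (gT : finGroupType) (K : {set gT}) (a : galg gT) : bool :=
  [forall x, (x \notin K) ==> (a x == 0)].

(* Conjugation by h as an automorphism of C[gT]: n |-> h n h^-1,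
   i.e. coefficient at m becomes a(h^-1 m h) = a (m ^ h). *)
Definition gconj (gT : finGroupType) (h : gT) (a : galg gT) : galg gT :=
  [ffun m => a (m ^ h)%g].

Definition gscale (gT : finGroupType) (c : algC) (a : galg gT) : galg gT :=
  [ffun g => c * a g].

Definition gidem (gT : finGroupType) (u : galg gT) : Prop := gmul u u = u.

Definition idem_eigenbasis (gT : finGroupType) (K : {set gT}) (P : seq (galg gT)) : Prop :=
  [/\ size P = #|K|,
      uniq P,
      (forall J, J \in P -> in_galg K J),
      (forall c : 'I_(size P) -> algC,
          \sum_(i < size P) gscale (c i) P`_i = 0 -> forall i, c i = 0)
    & (forall a, in_galg K a ->
          exists c : 'I_(size P) -> algC, a = \sum_(i < size P) gscale (c i) P`_i)] /\
  [/\ (forall a J, in_galg K a -> J \in P -> exists lam : algC, gmul a J = gscale lam J)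
    & (forall i j : 'I_(size P),
          gmul P`_i P`_j = if i == j then P`_i else 0)].

Definition primitive_idem (gT : finGroupType) (G : {set gT}) (u : galg gT) : Prop :=
  [/\ in_galg G u, gidem u, u != 0 &
      ~ exists u1 u2 : galg gT,
          [/\ in_galg G u1, in_galg G u2, gidem u1 & gidem u2] /\
          [/\ u1 != 0, u2 != 0, gmul u1 u2 = 0, gmul u2 u1 = 0 & u = u1 + u2]].

(* Main.v *)
Require Import Defs.
From HB Require Import structures.
From mathcomp Require Import all_boot all_order all_algebra all_fingroup all_solvable all_field all_character.
Import GRing.Theory Num.Theory.
Set Implicit Arguments. Unset Strict Implicit. Unset Printing Implicit Defensive.
Local Open Scope ring_scope.

Section G.
Variable gT : finGroupType.
Implicit Types a b c : galg gT.


Lemma gmulA a b c : gmul (gmul a b) c = gmul a (gmul b c).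
Proof.
apply/ffunP => g; rewrite !ffunE.
under eq_bigr do rewrite ffunE big_distrl /=.
rewrite exchange_big /=; apply: eq_bigr => x _.
rewrite ffunE big_distrr /= (reindex_inj (mulgI x)) /=.
apply: eq_bigr => z _; by rewrite mulKg invMg -mulgA mulrA.
Qed.

Lemma gmulDl a b c : gmul (a + b) c = gmul a c + gmul b c.
Proof.
by apply/ffunP => g; rewrite !ffunE -big_split; apply: eq_bigr => x _; rewrite ffunE mulrDl.
Qed.

Lemma gmulDr a b c : gmul a (b + c) = gmul a b + gmul a c.
Proof.
by apply/ffunP => g; rewrite !ffunE -big_split; apply: eq_bigr => x _; rewrite ffunE mulrDr.
Qed.

Lemma gmul0l a : gmul 0 a = 0.
Proof. by apply/ffunP => g; rewrite !ffunE big1 // => x _; rewrite ffunE mul0r. Qed.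
Lemma gmul0r a : gmul a 0 = 0.
Proof. by apply/ffunP => g; rewrite !ffunE big1 // => x _; rewrite ffunE mulr0. Qed.

Lemma gmulZl (k : algC) a b : gmul (gscale k a) b = gscale k (gmul a b).
Proof.
apply/ffunP => g; rewrite !ffunE big_distrr; apply: eq_bigr => x _. by rewrite ffunE; exact: (esym (mulrA _ _ _)).
Qed.
Lemma gmulZr (k : algC) a b : gmul a (gscale k b) = gscale k (gmul a b).
Proof.
by apply/ffunP => g; rewrite !ffunE big_distrr; apply: eq_bigr => x _; rewrite !ffunE mulrCA.
Qed.

Definition dlt (g : gT) : galg gT := [ffun x => (x == g)%:R].

Lemma galg_decomp a : a = \sum_g gscale (a g) (dlt g).
Proof.
apply/ffunP => x; rewrite sum_ffunE (bigD1 x) //= big1 => [|g /negbTE ng].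
  by rewrite !ffunE eqxx mulr1 addr0.
by rewrite !ffunE eq_sym ng mulr0.
Qed.

Lemma gmul_dltr a y g : gmul a (dlt y) g = a (g * y^-1)%g.
Proof.
rewrite ffunE (bigD1 (g * y^-1)%g) //= big1 => [|x nx].
  by rewrite ffunE invMg invgK mulgKV eqxx mulr1 addr0.
rewrite ffunE; case: eqP => [e|]; last by rewrite mulr0.
by case/eqP: nx; rewrite -e invMg invgK mulgA mulgV mul1g.
Qed.

Lemma gmul_dltl a y g : gmul (dlt y) a g = a (y^-1 * g)%g.
Proof.
rewrite ffunE (bigD1 y) //= big1 => [|x nx].
  by rewrite ffunE eqxx mul1r addr0.
by rewrite ffunE (negbTE nx) mul0r.
Qed.

Lemma dlt_comm a y : gmul (dlt y) a = gmul (gconj y a) (dlt y).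
Proof.
apply/ffunP => g; rewrite gmul_dltl gmul_dltr ffunE.
by rewrite /conjg -!mulgA mulVg mulg1.
Qed.

Lemma dltM x y : gmul (dlt x) (dlt y) = dlt (x * y)%g.
Proof.
apply/ffunP => g; rewrite gmul_dltl !ffunE.
by rewrite -(inj_eq (mulgI x)) mulKVg.
Qed.


Lemma in_galgP (A : {set gT}) a x : in_galg A a -> x \notin A -> a x = 0.
Proof. by move=> /forallP/(_ x)/implyP H /H/eqP. Qed.

Lemma in_galgI (A : {set gT}) a : (forall x, x \notin A -> a x = 0) -> in_galg A a.
Proof. by move=> H; apply/forallP => x; apply/implyP => /H ->. Qed.

Lemma in_galg_mul (A B : {set gT}) a b :
  in_galg A a -> in_galg B b -> in_galg (A * B)%g (gmul a b).
Proof.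
move=> Ha Hb; apply: in_galgI => g ng; rewrite ffunE big1 // => x _.
have [xA|xA] := boolP (x \in A); last by rewrite (in_galgP Ha xA) mul0r.
have [yB|yB] := boolP ((x^-1 * g)%g \in B); last by rewrite (in_galgP Hb yB) mulr0.
by case/negP: ng; rewrite -(mulKVg x g) mem_mulg.
Qed.

Lemma in_galg_mulG (A : {group gT}) a b :
  in_galg A a -> in_galg A b -> in_galg A (gmul a b).
Proof. by move=> Ha Hb; have := in_galg_mul Ha Hb; rewrite mulGid. Qed.

Lemma in_galg_sub (A B : {set gT}) a : A \subset B -> in_galg A a -> in_galg B a.
Proof.
move=> sAB Ha; apply: in_galgI => x nx; apply: (in_galgP Ha).
by apply: contra nx; apply: (subsetP sAB).
Qed.

Lemma in_galg_dlt (A : {set gT}) g : g \in A -> in_galg A (dlt g).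
Proof.
by move=> gA; apply: in_galgI => x nx; rewrite ffunE; case: eqP nx => // ->; rewrite gA.
Qed.

Lemma gmulC (A : {group gT}) a b : abelian A ->
  in_galg A a -> in_galg A b -> gmul a b = gmul b a.
Proof.
move=> abA Ha Hb; apply/ffunP => g.
have [gA|ngA] := boolP (g \in A); last first.
  by rewrite (in_galgP (in_galg_mulG Ha Hb) ngA) (in_galgP (in_galg_mulG Hb Ha) ngA).
have inj : injective (fun y : gT => g * y^-1)%g.
  by move=> y1 y2 /mulgI /invg_inj.
rewrite !ffunE (reindex_inj inj) /=; apply: eq_bigr => y _.
rewrite invMg invgK mulgKV.
have [yA|nyA] := boolP (y \in A); last by rewrite (in_galgP Hb nyA) mulr0 mul0r.
rewrite mulrC; congr (_ * a _).
exact: esym (centsP abA _ (groupVr yA) _ gA).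
Qed.

Lemma gconjM k a b : gconj k (gmul a b) = gmul (gconj k a) (gconj k b).
Proof.
apply/ffunP => m; rewrite !ffunE (reindex_inj (@conjg_inj _ k)) /=.
by apply: eq_bigr => y _; rewrite !ffunE conjMg conjVg.
Qed.

Lemma gconj_comp k h a : gconj k (gconj h a) = gconj (k * h)%g a.
Proof. by apply/ffunP => m; rewrite !ffunE conjgM. Qed.

Lemma gconj1 a : gconj (1 : gT)%g a = a.
Proof. by apply/ffunP => m; rewrite !ffunE conjg1. Qed.

Lemma gconjK k a : gconj k^-1 (gconj k a) = a.
Proof. by rewrite gconj_comp mulVg gconj1. Qed.

Lemma gconj_inj k : injective (@gconj gT k).
Proof. by move=> a b /(congr1 (gconj k^-1)); rewrite !gconjK. Qed.

Lemma gconjZ k (c : algC) a : gconj k (gscale c a) = gscale c (gconj k a).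
Proof. by apply/ffunP => m; rewrite !ffunE. Qed.

Lemma in_galg_conj (A : {set gT}) k a : k \in ('N(A))%g -> in_galg A a -> in_galg A (gconj k a).
Proof.
by move=> nA Ha; apply: in_galgI => x nx; rewrite ffunE (in_galgP Ha) // memJ_norm.
Qed.


Lemma gscale0 a : gscale 0 a = 0.
Proof. by apply/ffunP => m; rewrite !ffunE mul0r. Qed.
Lemma gscalex0 (c : algC) : gscale c (0 : galg gT) = 0.
Proof. by apply/ffunP => m; rewrite !ffunE mulr0. Qed.
Lemma gscale1 a : gscale 1 a = a.
Proof. by apply/ffunP => m; rewrite !ffunE mul1r. Qed.
Lemma gscaleA (c d : algC) a : gscale c (gscale d a) = gscale (c * d) a.
Proof. by apply/ffunP => m; rewrite !ffunE mulrA. Qed.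
Lemma gscaleD (c d : algC) a : gscale c a + gscale d a = gscale (c + d) a.
Proof. by apply/ffunP => m; rewrite !ffunE mulrDl. Qed.
Lemma gconj0 k : gconj k (0 : galg gT) = 0.
Proof. by apply/ffunP => m; rewrite !ffunE. Qed.

Lemma nz_point a : a != 0 -> exists m, a m != 0.
Proof.
move=> nz; case: (pickP (fun m => a m != 0)) => [m Hm|H]; first by exists m.
case/eqP: nz; apply/ffunP => m; move: (H m) => /negbFE/eqP ->; by rewrite ffunE.
Qed.

Lemma gscale_inj a (c d : algC) : a != 0 -> gscale c a = gscale d a -> c = d.
Proof.
case/nz_point => m nm /ffunP/(_ m); rewrite !ffunE => E.
by apply: (mulIf nm); exact: E.
Qed.

Lemma gmul_sumr I (r : seq I) (P : pred I) (F : I -> galg gT) a :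
  gmul a (\sum_(i <- r | P i) F i) = \sum_(i <- r | P i) gmul a (F i).
Proof. exact: (big_morph (gmul a) (gmulDr a) (gmul0r a)). Qed.

Lemma gmul_suml I (r : seq I) (P : pred I) (F : I -> galg gT) a :
  gmul (\sum_(i <- r | P i) F i) a = \sum_(i <- r | P i) gmul (F i) a.
Proof. by apply: (big_morph (fun x => gmul x a)) => [x y|]; rewrite ?gmulDl ?gmul0l. Qed.

Lemma EB_nz (K : {set gT}) P J : idem_eigenbasis K P -> J \in P -> J != 0.
Proof.
move=> [[_ _ _ Hli _] _] JP; apply/negP => /eqP J0.
have iP : (index J P < size P)%N by rewrite index_mem.
pose i := Ordinal iP : 'I_(size P).
have := Hli (fun j => (j == i)%:R); rewrite big1 => [/(_ erefl i)|j _].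
  by rewrite eqxx => /eqP; rewrite oner_eq0.
case: eqP => [->|_]; last by rewrite gscale0.
by rewrite /= nth_index // J0 gscalex0.
Qed.

Lemma EB_idem (K : {set gT}) P J : idem_eigenbasis K P -> J \in P -> gmul J J = J.
Proof.
move=> [_ [_ Ho]] JP; have iP : (index J P < size P)%N by rewrite index_mem.
pose i := Ordinal iP : 'I_(size P).
by have := Ho i i; rewrite eqxx /= nth_index.
Qed.

Lemma EB_supp (K : {set gT}) P J : idem_eigenbasis K P -> J \in P -> in_galg K J.
Proof. by move=> [[_ _ Hs _ _] _]; apply: Hs. Qed.

Lemma EB_eig (K : {set gT}) P J a : idem_eigenbasis K P -> J \in P -> in_galg K a ->
  exists lam, gmul a J = gscale lam J.
Proof. by move=> [_ [He _]] JP Ka; apply: He. Qed.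

Lemma prim_from_key (G : {set gT}) e : gidem e -> e != 0 ->
  (forall a, in_galg G a -> exists c : algC, gmul (gmul e a) e = gscale c e) ->
  ~ exists u1 u2 : galg gT,
          [/\ in_galg G u1, in_galg G u2, gidem u1 & gidem u2] /\
          [/\ u1 != 0, u2 != 0, gmul u1 u2 = 0, gmul u2 u1 = 0 & e = u1 + u2].
Proof.
move=> ie nze key [e1 [e2 [[G1 G2 i1 i2] [nz1 nz2 o12 o21 de]]]].
have l1 : gmul e e1 = e1 by rewrite de gmulDl i1 o21 addr0.
have r1 : gmul e1 e = e1 by rewrite de gmulDr i1 o12 addr0.
have [c Hc] := key _ G1; rewrite l1 r1 in Hc.
have cc : c * c = c.
  apply: (gscale_inj nze); rewrite -gscaleA -Hc.
  by rewrite -{2}i1 Hc gmulZl gmulZr ie.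
have c0 : c != 0 by apply: contraNneq nz1 => c0; rewrite Hc c0 gscale0.
have c1 : c = 1 by apply: (mulIf c0); rewrite mul1r.
move: de; rewrite Hc c1 gscale1 -{1}(addr0 e) => /addrI e20.
by case/eqP: nz2.
Qed.

End G.

Section Main.
Variables (gT : finGroupType) (G N H : {group gT}).
Hypotheses (sdG : (N ><| H)%g = G) (abN : abelian N) (abH : abelian H).
Variables (PN : seq (galg gT)) (v0 : galg gT) (PHa : seq (galg gT)).
Hypotheses (hPN : idem_eigenbasis N PN) (v0P : v0 \in PN)
  (hPHa : idem_eigenbasis [set h in H | gconj h v0 == v0] PHa).

Let Ha := [set h in H | gconj h v0 == v0].

Lemma ctx : [/\ (N <| G)%g, H \subset G, (N * H)%g = G, H \subset 'N(N)%g & (N :&: H)%g = 1%g].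
Proof. exact: sdprod_context. Qed.

Lemma HN k : k \in H -> k \in 'N(N)%g.
Proof. by case: ctx => _ _ _ nNH _; apply: (subsetP nNH). Qed.

Lemma S_supp k : k \in H -> in_galg N (gconj k v0).
Proof. by move=> kH; apply: in_galg_conj (HN kH) (EB_supp hPN v0P). Qed.

Lemma S_idem k : gmul (gconj k v0) (gconj k v0) = gconj k v0.
Proof. by rewrite -gconjM (EB_idem hPN v0P). Qed.

Lemma S_nz k : gconj k v0 != 0.
Proof.
apply: contra (EB_nz hPN v0P) => /eqP E; apply/eqP.
by apply: (gconj_inj (k := k)); rewrite E gconj0.
Qed.

Lemma S_eig k a : k \in H -> in_galg N a -> exists lam : algC,
  gmul a (gconj k v0) = gscale lam (gconj k v0).
Proof.
move=> kH Na.
have Na' : in_galg N (gconj k^-1 a) by apply: in_galg_conj => //; apply: HN; rewrite groupV.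
have [lam Hl] := EB_eig hPN v0P Na'; exists lam.
by rewrite -{1}(gconjK k^-1 a) invgK -gconjM Hl gconjZ.
Qed.

Lemma S_dich k l : k \in H -> l \in H ->
  gmul (gconj k v0) (gconj l v0) = 0 \/ gconj l v0 = gconj k v0.
Proof.
move=> kH lH; set x := gconj k v0; set y := gconj l v0.
have [l1 H1] := S_eig lH (S_supp kH).
have [l2 H2] := S_eig kH (S_supp lH).
have E : gscale l1 y = gscale l2 x by rewrite -H1 -H2; apply: gmulC abN (S_supp kH) (S_supp lH).
have [l10|nz1] := eqVneq l1 0; first by left; rewrite H1 l10 gscale0.
right.
have Ey : y = gscale (l1^-1 * l2) x by rewrite -gscaleA -E gscaleA mulVf // gscale1.
have cc : (l1^-1 * l2) * (l1^-1 * l2) = l1^-1 * l2.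
  apply: (gscale_inj (S_nz k)); rewrite -gscaleA -Ey.
  by have := S_idem l; rewrite -/y {1 2}Ey gmulZl gmulZr (S_idem k) -Ey.
have c0 : l1^-1 * l2 != 0.
  by apply: contraNneq (S_nz l) => c0; rewrite -/y Ey c0 gscale0.
have c1 : l1^-1 * l2 = 1 by apply: (mulIf c0); rewrite mul1r.
by rewrite Ey c1 gscale1.
Qed.


Lemma Ha_sub : Ha \subset H.
Proof. by apply/subsetP => k; rewrite inE => /andP[]. Qed.

Variables (h : gT) (u : galg gT).
Hypotheses (hH : h \in H) (uP : u \in PHa).
Local Notation v := (gconj h v0).
Local Notation e := (gmul (gconj h v0) u).

Lemma conj_v_eq k : k \in H -> gconj k v = gconj h (gconj k v0).
Proof. by move=> kH; rewrite !gconj_comp (centsP abH _ kH _ hH). Qed.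

Lemma conj_v k : k \in Ha -> gconj k v = v.
Proof.
move=> kHa; have kH := subsetP Ha_sub _ kHa.
by rewrite conj_v_eq //; move: kHa; rewrite inE => /andP[_ /eqP ->].
Qed.

Lemma conj_v_Ha k : k \in H -> gconj k v = v -> k \in Ha.
Proof. by move=> kH; rewrite conj_v_eq // => /gconj_inj E; rewrite inE kH E eqxx. Qed.

Lemma uS : in_galg H u.
Proof. exact: in_galg_sub Ha_sub (EB_supp hPHa uP). Qed.

Lemma uv_comm : gmul v u = gmul u v.
Proof.
rewrite (galg_decomp u) gmul_sumr gmul_suml; apply: eq_bigr => k _.
rewrite gmulZr gmulZl.
have [kHa|nk] := boolP (k \in Ha); last by rewrite (in_galgP (EB_supp hPHa uP) nk) !gscale0.
by rewrite dlt_comm conj_v.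
Qed.

Lemma e_supp : in_galg G e.
Proof.
case: ctx => _ _ NH _ _; rewrite -NH.
exact: in_galg_mul (S_supp hH) uS.
Qed.

Lemma e_idem : gmul e e = e.
Proof.
rewrite !gmulA -(gmulA u v u) -uv_comm gmulA (EB_idem hPHa uP).
by rewrite -gmulA S_idem.
Qed.

Lemma e_nz : e != 0.
Proof.
case: ctx => _ _ _ _ tiNH.
have [m nm] := nz_point (S_nz h).
have mN : m \in N by apply: contraR nm => /(in_galgP (S_supp hH)) ->.
have [k nk] := nz_point (EB_nz hPHa uP).
have kHa : k \in Ha by apply: contraR nk => /(in_galgP (EB_supp hPHa uP)) ->.
have kH := subsetP Ha_sub _ kHa.
apply/eqP => /ffunP/(_ (m * k)%g); rewrite !ffunE (bigD1 m) //= mulKg big1.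
  by rewrite addr0 => /eqP; rewrite mulf_eq0 (negbTE nm) (negbTE nk).
move=> x nx.
have [xN|xN] := boolP (x \in N); last by rewrite (in_galgP (S_supp hH) xN) mul0r.
have [yH|yH] := boolP ((x^-1 * (m * k))%g \in Ha); last by rewrite (in_galgP (EB_supp hPHa uP) yH) mulr0.
have : (x^-1 * m)%g \in (N :&: H)%g.
  rewrite inE groupM ?groupV //=.
  have := groupM (subsetP Ha_sub _ yH) (groupVr kH).
  by rewrite mulgA mulgK.
rewrite tiNH inE -(inj_eq (mulgI x)) mulKVg mulg1 => /eqP xm.
by case/eqP: nx.
Qed.


Lemma key_H k : k \in H -> exists c : algC, gmul (gmul e (dlt k)) e = gscale c e.
Proof.
move=> kH.
have Cu : gmul u (dlt k) = gmul (dlt k) u := gmulC abH uS (in_galg_dlt kH).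
have X1 : gmul (gmul e (dlt k)) e = gmul (gmul (gmul v (gconj k v)) (dlt k)) u.
  transitivity (gmul v (gmul (gmul u (dlt k)) (gmul v u))); first by rewrite !gmulA.
  rewrite Cu.
  transitivity (gmul v (gmul (dlt k) (gmul (gmul u v) u))); first by rewrite !gmulA.
  rewrite -uv_comm gmulA (EB_idem hPHa uP).
  transitivity (gmul v (gmul (gmul (dlt k) v) u)); first by rewrite !gmulA.
  by rewrite dlt_comm !gmulA.
have Ew : gconj k v = gconj (k * h)%g v0 by rewrite gconj_comp.
rewrite X1 Ew.
case: (S_dich hH (groupM kH hH)) => [->|E].
  by exists 0; rewrite !gmul0l gscale0.
have kHa : k \in Ha by apply: conj_v_Ha => //; rewrite Ew.
have [mu Hmu] := EB_eig hPHa uP (in_galg_dlt kHa).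
by exists mu; rewrite E S_idem gmulA Hmu gmulZr.
Qed.

Lemma key_G g : g \in G -> exists c : algC, gmul (gmul e (dlt g)) e = gscale c e.
Proof.
case: ctx => _ _ NH _ _; rewrite -NH => /mulsgP[n k nN kH ->].
have [chi Hchi] := S_eig hH (in_galg_dlt nN).
have Ev : gmul v (dlt n) = gscale chi v.
  by rewrite (gmulC abN (S_supp hH) (in_galg_dlt nN)).
have Ee : gmul e (dlt n) = gscale chi e by rewrite uv_comm gmulA Ev gmulZr.
have [c Hc] := key_H kH.
by exists (chi * c); rewrite -dltM -(gmulA e) Ee gmulZl gmulZl Hc gscaleA.
Qed.

Lemma key a : in_galg G a -> exists c : algC, gmul (gmul e a) e = gscale c e.
Proof.
move=> Ga; rewrite (galg_decomp a) gmul_sumr gmul_suml.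
apply: (big_ind (fun x => exists c : algC, x = gscale c e)).
- by exists 0; rewrite gscale0.
- by move=> x y [c1 ->] [c2 ->]; exists (c1 + c2); rewrite gscaleD.
move=> g _; rewrite gmulZr gmulZl.
have [gG|ngG] := boolP (g \in G); last by exists 0; rewrite (in_galgP Ga ngG) !gscale0.
by have [c ->] := key_G gG; exists (a g * c); rewrite gscaleA.
Qed.

Lemma prim : primitive_idem G e.
Proof.
split; [exact: e_supp | exact: e_idem | exact: e_nz |].
exact: prim_from_key e_idem e_nz key.
Qed.

End Main.

Unset Implicit Arguments.
Theorem mainTheorem6 (gT : finGroupType) (G N H : {group gT})
  (sdG : (N ><| H)%g = G) (abN : abelian N) (abH : abelian H)
  (PN : seq (galg gT)) (hPN : idem_eigenbasis N PN)
  (v0 : galg gT) (v0P : v0 \in PN)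
  (PHa : seq (galg gT))
  (hPHa : idem_eigenbasis [set h in H | gconj h v0 == v0] PHa) :
  forall (h : gT) (u : galg gT), h \in H -> u \in PHa ->
    primitive_idem G (gmul (gconj h v0) u).
Proof.
move=> h u hH uP; exact: (prim sdG abN abH hPN v0P hPHa hH uP).
Qed.
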